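(* Let $d\ge2$ be even, let $K^\infty(t)=\frac{1}{2\pi}t(\pi-\arccos t)$, and for integers $k\ge0$ define $$a_k^d=V_d\int_{-1}^1K^\infty(t)\,P_{k,d}(t)\,(1-t^2)^{\frac{d-2}{2}}\,dt,\qquad V_d=\frac{\pi^{d/2}}{\Gamma(\frac d2+1)}.$$ Set $p=k+\frac{d-2}{2}$, $$C_1(d,k)=\frac{\pi^{d/2}}{d/2}\,\frac{(-1)^k}{2^k}\,\frac{1}{\Gamma(k+\frac d2)},\qquad C_2(q,d,k)=(-1)^q\binom{p}{q}\frac{(2q)!}{(2q-k)!}.$$ Then $$a_k^d=\begin{cases}C_1(d,0)\,\frac{1}{d\,2^{d+1}}\binom{d}{d/2}, & k=0,\\[2pt] C_1(d,1)\sum_{q=1}^{p}C_2(q,d,1)\,\frac{1}{2(2q+1)}, & k=1,\\[2pt] C_1(d,k)\sum_{q=\lceil k/2\rceil}^{p}C_2(q,d,k)\,\frac{1}{2(2q-k+2)}\Big(1-\frac{1}{2^{2q-k+2}}\binom{2q-k+2}{\frac{2q-k+2}{2}}\Big), & k\ge2\text{ even},\\[2pt] 0,& k\ge3\text{ odd}.\end{cases}$$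
   Context: $P_{k,d}$ is the Gegenbauer polynomial (zonal harmonic of degree $k$ on $\mathbb{S}^d\subset\mathbb{R}^{d+1}$): $P_{k,d}(t)=\frac{(-1)^k}{2^k}\frac{\Gamma(\frac d2)}{\Gamma(k+\frac d2)}\frac{1}{(1-t^2)^{\frac{d-2}{2}}}\frac{d^k}{dt^k}(1-t^2)^{k+\frac{d-2}{2}}$. By the Funk–Hecke theorem, $a_k^d$ is (up to the fixed normalizing constant $V_d$, which is independent of $k$) the eigenvalue of convolution on $\mathbb{S}^d$ with $K^\infty$ on spherical harmonics of degree $k$. $\binom{p}{q}=0$ when $q>p$. *)

(* Defs.v *)
From Stdlib Require Import Reals Lra Lia Arith List.
Open Scope R_scope.

Definition Kinf (t : R) : R := / (2 * PI) * t * (PI - acos t).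

Inductive nth_deriv : nat -> (R -> R) -> (R -> R) -> Prop :=
| nth_deriv_O : forall f, nth_deriv O f f
| nth_deriv_S : forall n f h g,
    (forall x, derivable_pt_lim f x (h x)) -> nth_deriv n h g ->
    nth_deriv (S n) f g.

(* sum_{i=a}^{b} f i  (empty if b < a) *)
Definition sumR (a b : nat) (f : nat -> R) : R :=
  fold_right Rplus 0 (map f (seq a (S b - a))).

(* For d even, d/2 is an integer, so Gamma(d/2+1) = (d/2)!,
   Gamma(d/2) = (d/2 - 1)!, Gamma(k + d/2) = (k + d/2 - 1)!. *)

Definition Vd (d : nat) : R := PI ^ (d / 2) / INR (fact (d / 2)).

(* The Gegenbauer polynomial P_{k,d}, given Dk = d^k/dt^k (1-t^2)^{k+(d-2)/2} *)
Definition Pkd (d k : nat) (Dk : R -> R) (t : R) : R :=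
  (-1) ^ k / 2 ^ k * (INR (fact (d / 2 - 1)) / INR (fact (k + d / 2 - 1)))
  * / (1 - t ^ 2) ^ ((d - 2) / 2) * Dk t.

Definition akd_integrand (d k : nat) (Dk : R -> R) (t : R) : R :=
  Kinf t * Pkd d k Dk t * (1 - t ^ 2) ^ ((d - 2) / 2).

Definition pp (d k : nat) : nat := (k + (d - 2) / 2)%nat.

Definition C1 (d k : nat) : R :=
  PI ^ (d / 2) / INR (d / 2) * ((-1) ^ k / 2 ^ k) * / INR (fact (k + d / 2 - 1)).

Definition C2 (q d k : nat) : R :=
  (-1) ^ q * C (pp d k) q * (INR (fact (2 * q)) / INR (fact (2 * q - k))).

Definition akd_formula (d k : nat) : R :=
  if Nat.eqb k 0 then
    C1 d 0 * (/ (INR d * 2 ^ (d + 1))) * C d (d / 2)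
  else if Nat.eqb k 1 then
    C1 d 1 * sumR 1 (pp d 1) (fun q => C2 q d 1 * / (2 * INR (2 * q + 1)))
  else if Nat.even k then
    C1 d k * sumR ((k + 1) / 2) (pp d k) (fun q =>
      C2 q d k * / (2 * INR (2 * q - k + 2)) *
      (1 - / 2 ^ (2 * q - k + 2) * C (2 * q - k + 2) ((2 * q - k + 2) / 2)))
  else 0.

(* Main.v *)
Require Import Defs.
From Stdlib Require Import Reals Lra Lia Arith List FunctionalExtensionality.
From Coquelicot Require Import Coquelicot.
Open Scope R_scope.
Ltac req := match goal with |- ?a = ?b => change (@eq R a b) end.

Fixpoint ffn (n j : nat) : nat :=
  match j with O => 1%nat | S j => (ffn n j * (n - j))%nat end.

Definition Tp (p j : nat) (t : R) : R :=
  sum_f_R0 (fun q => (-1) ^ q * Binomial.C p q * INR (ffn (2 * q) j) * t ^ (2 * q - j)) p.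

Lemma deriv_sum (F dF : nat -> R -> R) (x : R) (n : nat) :
  (forall q, derivable_pt_lim (F q) x (dF q x)) ->
  derivable_pt_lim (fun t => sum_f_R0 (fun q => F q t) n) x
    (sum_f_R0 (fun q => dF q x) n).
Proof.
  intros H. induction n as [|n IH]; simpl.
  - apply H.
  - apply (derivable_pt_lim_plus (fun t => sum_f_R0 (fun q => F q t) n) (F (S n))); auto.
Qed.

Lemma Tp_deriv (p j : nat) (x : R) : derivable_pt_lim (Tp p j) x (Tp p (S j) x).
Proof.
  unfold Tp.
  apply (deriv_sum (fun q t => (-1) ^ q * Binomial.C p q * INR (ffn (2 * q) j) * t ^ (2 * q - j))
                   (fun q t => (-1) ^ q * Binomial.C p q * INR (ffn (2 * q) (S j)) * t ^ (2 * q - S j))).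
  intros q.
  set (c := (-1) ^ q * Binomial.C p q * INR (ffn (2 * q) j)).
  replace ((-1) ^ q * Binomial.C p q * INR (ffn (2 * q) (S j)) * x ^ (2 * q - S j))
    with (c * (INR (2 * q - j) * x ^ Init.Nat.pred (2 * q - j))).
  - apply (derivable_pt_lim_scal (fun t => t ^ (2 * q - j))). apply derivable_pt_lim_pow.
  - unfold c. change (ffn (2 * q) (S j)) with (ffn (2 * q) j * (2 * q - j))%nat. rewrite mult_INR.
    replace (Init.Nat.pred (2 * q - j)) with (2 * q - S j)%nat by lia. ring.
Qed.

Lemma Tp_nth (p m j : nat) : nth_deriv m (Tp p j) (Tp p (j + m)).
Proof.
  revert j. induction m as [|m IH]; intros j.
  - rewrite Nat.add_0_r. constructor.
  - apply nth_deriv_S with (h := Tp p (S j)).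
    + intros x. apply Tp_deriv.
    + replace (j + S m)%nat with (S j + m)%nat by lia. apply IH.
Qed.

Lemma Tp0 (p : nat) : (fun t => (1 - t ^ 2) ^ p) = Tp p 0.
Proof.
  apply functional_extensionality. intros t. unfold Tp.
  replace (1 - t ^ 2) with (- (t ^ 2) + 1) by ring.
  rewrite binomial. apply sum_eq. intros i Hi.
  rewrite pow1, Nat.sub_0_r. change (ffn (2 * i) 0) with 1%nat. simpl INR. rewrite !Rmult_1_r.
  replace (- t ^ 2) with (-1 * t ^ 2) by ring.
  rewrite Rpow_mult_distr, pow_mult. simpl INR. ring.
Qed.

Lemma acos_le1 x : 1 <= x -> acos x = 0.
Proof. intros H. unfold acos. destruct (Rle_dec x (-1)); [lra|]. destruct (Rle_dec 1 x); lra. Qed.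
Lemma acos_lem1 x : x <= -1 -> acos x = PI.
Proof. intros H. unfold acos. destruct (Rle_dec x (-1)); lra. Qed.

Lemma acos_mono x y : x <= y -> acos y <= acos x.
Proof.
  intros H.
  destruct (Rle_dec x (-1)) as [H1|H1].
  { rewrite (acos_lem1 x H1). apply acos_bound. }
  destruct (Rle_dec 1 y) as [H2|H2].
  { rewrite (acos_le1 y H2). apply acos_bound. }
  destruct (Rle_dec (acos y) (acos x)) as [H3|H3]; auto.
  exfalso.
  assert (cos (acos y) < cos (acos x)).
  { apply cos_decreasing_1; try apply acos_bound. lra. }
  rewrite !cos_acos in H0; lra.
Qed.

Lemma acos_cont x0 : continuity_pt acos x0.
Proof.
  intros eps Heps. set (a := acos x0).
  assert (Ha := acos_bound x0). fold a in Ha.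
  assert (Hup : exists d1, d1 > 0 /\ forall x, Rabs (x - x0) < d1 -> acos x <= a + eps / 2).
  { destruct (Rle_dec PI (a + eps/2)) as [h|h].
    - exists 1. split; [lra|]. intros x _. pose proof (acos_bound x). lra.
    - apply Rnot_le_lt in h. set (th := a + eps / 2). set (u := cos th).
      assert (Hu : acos u = th) by (apply acos_cos; unfold th; split; lra).
      assert (Hx0 : u < x0).
      { destruct (Rlt_dec u x0) as [?|n]; auto. exfalso. apply Rnot_lt_le in n.
        pose proof (acos_mono x0 u n). fold a in H. unfold th in *. lra. }
      exists (x0 - u). split; [lra|]. intros x Hx.
      apply Rabs_def2 in Hx. pose proof (acos_mono u x ltac:(lra)). unfold th in *. lra. }
  assert (Hlo : exists d2, d2 > 0 /\ forall x, Rabs (x - x0) < d2 -> a - eps / 2 <= acos x).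
  { destruct (Rle_dec (a - eps/2) 0) as [h|h].
    - exists 1. split; [lra|]. intros x _. pose proof (acos_bound x). lra.
    - apply Rnot_le_lt in h. set (th := a - eps / 2). set (v := cos th).
      assert (Hv : acos v = th) by (apply acos_cos; unfold th; split; lra).
      assert (Hx0 : x0 < v).
      { destruct (Rlt_dec x0 v) as [?|n]; auto. exfalso. apply Rnot_lt_le in n.
        pose proof (acos_mono v x0 n). fold a in H. unfold th in *. lra. }
      exists (v - x0). split; [lra|]. intros x Hx.
      apply Rabs_def2 in Hx. pose proof (acos_mono x v ltac:(lra)). unfold th in *. lra. }
  destruct Hup as [d1 [Hd1 H1]]. destruct Hlo as [d2 [Hd2 H2]].
  exists (Rmin d1 d2). split; [apply Rmin_pos; lra|].
  intros x [_ Hx]. simpl in *. unfold R_dist in *.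
  specialize (H1 x ltac:(eapply Rlt_le_trans; [apply Hx| apply Rmin_l])).
  specialize (H2 x ltac:(eapply Rlt_le_trans; [apply Hx| apply Rmin_r])).
  fold a. apply Rabs_def1; lra.
Qed.

Lemma cont_ex (f : R -> R) x : ex_derive f x -> continuous f x.
Proof.
  intros H. apply continuity_pt_filterlim. apply derivable_continuous_pt.
  apply ex_derive_Reals_0. exact H.
Qed.

Lemma Kinf_cont t : continuous Kinf t.
Proof.
  unfold Kinf.
  apply (continuous_mult (fun t => / (2 * PI) * t) (fun t => PI - acos t)).
  - apply cont_ex. auto_derive. auto.
  - apply (continuous_minus (fun _ => PI) acos).
    + apply continuous_const.
    + apply continuity_pt_filterlim. apply acos_cont.
Qed.

Lemma subst (g : R -> R) : (forall t, continuous g t) ->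
  is_RInt (fun t => Kinf t * g t) (-1) 1
    (RInt (fun th => sin th * (Kinf (cos th) * g (cos th))) 0 PI).
Proof.
  intros Hg. set (f := fun t => Kinf t * g t).
  assert (Hf : forall t, continuous f t).
  { intros t. apply (continuous_mult Kinf g). apply Kinf_cont. apply Hg. }
  assert (Hex : ex_RInt f (-1) 1).
  { apply (ex_RInt_continuous (V:=R_CompleteNormedModule)). intros; apply Hf. }
  pose proof (is_RInt_comp (V:=R_CompleteNormedModule) f cos (fun y => - sin y) 0 PI) as H.
  rewrite cos_0, cos_PI in H.
  assert (H1 : is_RInt (fun y => - sin y * f (cos y)) 0 PI (RInt f 1 (-1))).
  { apply H.
    - intros; apply Hf.
    - intros x _. split.
      + apply is_derive_Reals. apply derivable_pt_lim_cos.
      + apply cont_ex. auto_derive. auto. }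
  rewrite <- opp_RInt_swap in H1 by exact Hex.
  apply is_RInt_opp in H1. rewrite opp_opp in H1.
  assert (E : RInt (fun th => sin th * (Kinf (cos th) * g (cos th))) 0 PI = RInt f (-1) 1).
  { apply is_RInt_unique. eapply is_RInt_ext; [|exact H1].
    intros x _. unfold f. change (opp (- sin x * (Kinf (cos x) * g (cos x))) = sin x * (Kinf (cos x) * g (cos x))).
    unfold opp; simpl. ring. }
  rewrite E. apply (RInt_correct (V:=R_CompleteNormedModule)). exact Hex.
Qed.

Lemma ftc (F f : R -> R) a b :
  (forall x, is_derive F x (f x)) -> (forall x, continuous f x) ->
  is_RInt f a b (F b - F a).
Proof.
  intros H1 H2. apply (is_RInt_derive (V:=R_CompleteNormedModule) F f a b).
  - intros; apply H1.
  - intros; apply H2.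
Qed.

Lemma uniq (f : R -> R) a b l1 l2 : is_RInt f a b l1 -> is_RInt f a b l2 -> l1 = l2.
Proof.
  intros H1 H2. rewrite <- (is_RInt_unique (V:=R_CompleteNormedModule) f a b l1 H1).
  apply (is_RInt_unique (V:=R_CompleteNormedModule) f a b l2 H2).
Qed.

Lemma corr (f : R -> R) a b : (forall x, continuous f x) -> is_RInt f a b (RInt f a b).
Proof.
  intros H. apply (RInt_correct (V:=R_CompleteNormedModule)).
  apply (ex_RInt_continuous (V:=R_CompleteNormedModule)). intros; apply H.
Qed.

Lemma lin2 (f g : R -> R) a b u v (cf cg : R) :
  is_RInt f a b u -> is_RInt g a b v ->
  is_RInt (fun x => cf * f x + cg * g x) a b (cf * u + cg * v).
Proof.
  intros Hf Hg.
  apply (is_RInt_plus (V:=R_NormedModule) (fun x => cf * f x) (fun x => cg * g x) a b (cf*u) (cg*v)).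
  - apply (is_RInt_scal (V:=R_NormedModule) f a b cf u Hf).
  - apply (is_RInt_scal (V:=R_NormedModule) g a b cg v Hg).
Qed.

Lemma cont_pow_cos n x : continuous (fun x => cos x ^ n) x.
Proof. apply cont_ex. auto_derive. auto. Qed.
Lemma cont_pow_sin n x : continuous (fun x => sin x ^ n) x.
Proof. apply cont_ex. auto_derive. auto. Qed.

Definition Wc n := RInt (fun x => cos x ^ n) 0 PI.
Definition Ws n := RInt (fun x => sin x ^ n) 0 PI.

Lemma Wc_rec n : (INR n + 2) * Wc (S (S n)) = (INR n + 1) * Wc n.
Proof.
  assert (H := ftc (fun x => sin x * cos x ^ (S n))
    (fun x => (INR n + 2) * cos x ^ (S (S n)) + (- (INR n + 1)) * cos x ^ n) 0 PI).
  cbv beta in H. rewrite sin_0, sin_PI in H.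
  assert (H' : is_RInt (fun x => (INR n + 2) * cos x ^ (S (S n)) + (- (INR n + 1)) * cos x ^ n) 0 PI 0).
  { assert (E0 : 0 * cos PI ^ S n - 0 * cos 0 ^ S n = 0) by ring. rewrite E0 in H. apply H.
    - intros x. auto_derive; auto.
      replace (match n with 0%nat => 1 | S _ => INR n + 1 end) with (INR (S n)) by reflexivity.
      rewrite S_INR. pose proof (sin2 x) as E. unfold Rsqr in E. simpl. replace (sin x * (1 * - sin x * ((INR n + 1) * cos x ^ n))) with (-(sin x * sin x) * ((INR n+1) * cos x ^ n)) by ring. rewrite E. ring.
    - intros x. apply cont_ex. auto_derive. auto. }
  pose proof (lin2 _ _ 0 PI _ _ (INR n + 2) (- (INR n + 1)) (corr _ 0 PI (cont_pow_cos (S (S n)))) (corr _ 0 PI (cont_pow_cos n))) as H2.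
  pose proof (uniq _ _ _ _ _ H' H2) as E. assert (E2 : (INR n + 2) * Wc (S (S n)) + - (INR n + 1) * Wc n = 0) by (symmetry; exact E). apply Rminus_diag_uniq. etransitivity; [|exact E2]. ring.
Qed.

Lemma Ws_rec n : (INR n + 2) * Ws (S (S n)) = (INR n + 1) * Ws n.
Proof.
  assert (H := ftc (fun x => cos x * sin x ^ (S n))
    (fun x => (- (INR n + 2)) * sin x ^ (S (S n)) + (INR n + 1) * sin x ^ n) 0 PI).
  cbv beta in H. rewrite sin_0, sin_PI in H.
  assert (H' : is_RInt (fun x => (- (INR n + 2)) * sin x ^ (S (S n)) + (INR n + 1) * sin x ^ n) 0 PI 0).
  { assert (E0 : cos PI * 0 ^ S n - cos 0 * 0 ^ S n = 0) by (simpl; ring). rewrite E0 in H. apply H.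
    - intros x. auto_derive; auto.
      replace (match n with 0%nat => 1 | S _ => INR n + 1 end) with (INR (S n)) by reflexivity.
      rewrite S_INR. pose proof (sin2 x) as E. unfold Rsqr in E. simpl.
      replace (cos x * (1 * cos x * ((INR n + 1) * sin x ^ n))) with ((cos x * cos x) * ((INR n+1) * sin x ^ n)) by ring.
      replace (cos x * cos x) with (1 - sin x * sin x) by lra. ring.
    - intros x. apply cont_ex. auto_derive. auto. }
  pose proof (lin2 _ _ 0 PI _ _ (- (INR n + 2)) (INR n + 1) (corr _ 0 PI (cont_pow_sin (S (S n)))) (corr _ 0 PI (cont_pow_sin n))) as H2.
  pose proof (uniq _ _ _ _ _ H' H2) as E.
  assert (E2 : - (INR n + 2) * Ws (S (S n)) + (INR n + 1) * Ws n = 0) by (symmetry; exact E).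
  apply Rminus_diag_uniq. transitivity (- (- (INR n + 2) * Ws (S (S n)) + (INR n + 1) * Ws n)); [ring| rewrite E2; ring].
Qed.

Lemma Wc0 : Wc 0 = PI.
Proof.
  unfold Wc. simpl. apply (is_RInt_unique (V:=R_CompleteNormedModule)).
  pose proof (is_RInt_const (V:=R_NormedModule) 0 PI 1) as H.
  change (scal (PI - 0) 1) with ((PI - 0) * 1) in H.
  rewrite Rmult_1_r, Rminus_0_r in H. exact H.
Qed.

Lemma Ws0 : Ws 0 = PI.
Proof. unfold Ws. exact Wc0. Qed.

Lemma Wc1 : Wc 1 = 0.
Proof.
  unfold Wc. apply (is_RInt_unique (V:=R_CompleteNormedModule)).
  assert (H : is_RInt (fun x => cos x ^ 1) 0 PI (sin PI - sin 0)).
  { apply (ftc sin (fun x => cos x ^ 1)).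
    - intros x. auto_derive; auto. ring.
    - intros; apply cont_pow_cos. }
  rewrite sin_PI, sin_0, Rminus_0_r in H. exact H.
Qed.

Definition wal (n : nat) : R := Binomial.C (2 * n) n / 2 ^ (2 * n).

Lemma wal_rec n : (INR (2 * n) + 2) * wal (S n) = (INR (2 * n) + 1) * wal n.
Proof.
  unfold wal, Binomial.C.
  replace (2 * S n)%nat with (S (S (2 * n))) by lia.
  replace (S (S (2 * n)) - S n)%nat with (S n) by lia.
  replace (2 * n - n)%nat with n by lia.
  rewrite !fact_simpl, !mult_INR, !S_INR. rewrite mult_INR. simpl pow.
  assert (H1 := INR_fact_neq_0 n). assert (H2 := INR_fact_neq_0 (2 * n)).
  assert (H3 : INR n + 1 <> 0) by (pose proof (pos_INR n); lra).
  assert (H4 := pow_nonzero 2 (2 * n) ltac:(lra)).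
  simpl INR. field. repeat split; auto.
Qed.

Lemma Wc_even n : Wc (2 * n) = PI * wal n.
Proof.
  induction n as [|n IH].
  - simpl. rewrite Wc0. unfold wal, Binomial.C. simpl. field; try lra.
  - replace (2 * S n)%nat with (S (S (2 * n))) by lia.
    pose proof (Wc_rec (2 * n)) as H. pose proof (wal_rec n) as H'.
    assert (Hp : INR (2 * n) + 2 <> 0) by (pose proof (pos_INR (2*n)); lra).
    apply (Rmult_eq_reg_l (INR (2 * n) + 2)); auto.
    rewrite H, IH. transitivity (PI * ((INR (2 * n) + 2) * wal (S n))); [rewrite H'; ring | ring].
Qed.

Lemma Wc_odd n : Wc (2 * n + 1) = 0.
Proof.
  induction n as [|n IH].
  - simpl. exact Wc1.
  - replace (2 * S n + 1)%nat with (S (S (2 * n + 1))) by lia.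
    pose proof (Wc_rec (2 * n + 1)) as H. rewrite IH, Rmult_0_r in H.
    assert (Hp : INR (2 * n + 1) + 2 <> 0) by (pose proof (pos_INR (2*n+1)); lra).
    apply (Rmult_eq_reg_l (INR (2 * n + 1) + 2)); auto. rewrite H. ring.
Qed.

Lemma Ws_even n : Ws (2 * n) = PI * wal n.
Proof.
  induction n as [|n IH].
  - simpl. rewrite Ws0. unfold wal, Binomial.C. simpl. field; try lra.
  - replace (2 * S n)%nat with (S (S (2 * n))) by lia.
    pose proof (Ws_rec (2 * n)) as H. pose proof (wal_rec n) as H'.
    assert (Hp : INR (2 * n) + 2 <> 0) by (pose proof (pos_INR (2*n)); lra).
    apply (Rmult_eq_reg_l (INR (2 * n) + 2)); auto.
    rewrite H, IH. transitivity (PI * ((INR (2 * n) + 2) * wal (S n))); [rewrite H'; ring | ring].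
Qed.

Lemma bp (F f : R -> R) :
  (forall x, is_derive F x (f x)) -> (forall x, continuous f x) ->
  is_RInt (fun x => / (2 * PI) * (PI - x) * f x) 0 PI
    (- / (2 * PI) * PI * F 0 + / (2 * PI) * RInt F 0 PI).
Proof.
  intros HF Hf.
  assert (HFc : forall x, continuous F x).
  { intros x. apply cont_ex. exists (f x). apply HF. }
  set (G := fun x => / (2 * PI) * (PI - x) * F x).
  assert (H1 : is_RInt (fun x => / (2 * PI) * (PI - x) * f x + - / (2 * PI) * F x) 0 PI (G PI - G 0)).
  { apply ftc.
    - intros x. apply is_derive_Reals. unfold G.
      replace (/ (2 * PI) * (PI - x) * f x + - / (2 * PI) * F x)
        with ((- / (2 * PI)) * F x + / (2 * PI) * (PI - x) * f x) by ring.
      apply (derivable_pt_lim_mult (fun x => / (2 * PI) * (PI - x)) F x).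
      + apply is_derive_Reals. auto_derive; auto. ring.
      + apply is_derive_Reals. apply HF.
    - intros x.
      apply (continuous_plus (V:=R_NormedModule) (fun x => / (2 * PI) * (PI - x) * f x) (fun x => - / (2 * PI) * F x)).
      + apply (continuous_mult (fun x => / (2 * PI) * (PI - x)) f).
        * apply cont_ex. auto_derive. auto.
        * apply Hf.
      + apply (continuous_mult (fun _ => - / (2 * PI)) F).
        * apply continuous_const.
        * apply HFc. }
  pose proof (lin2 _ _ 0 PI _ _ 1 (/ (2 * PI)) H1 (corr F 0 PI HFc)) as H2.
  unfold G in H2. rewrite Rminus_diag, Rmult_0_r, Rmult_0_l, Rminus_0_r in H2.
  replace (- / (2 * PI) * PI * F 0 + / (2 * PI) * RInt F 0 PI)
    with (1 * (0 - / (2 * PI) * PI * F 0) + / (2 * PI) * RInt F 0 PI) by ring.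
  eapply is_RInt_ext; [|exact H2].
  intros x _. cbv beta. match goal with |- ?a = ?b => change (@eq R a b) end. ring.
Qed.

Lemma RInt_val (f : R -> R) a b l : is_RInt f a b l -> RInt f a b = l.
Proof. apply (is_RInt_unique (V:=R_CompleteNormedModule)). Qed.

Lemma Jm (m : nat) :
  is_RInt (fun t => Kinf t * t ^ m) (-1) 1 ((PI - Wc (m + 2)) / (2 * PI * (INR m + 2))).
Proof.
  assert (Hm : INR m + 2 <> 0) by (pose proof (pos_INR m); lra).
  assert (HPI := PI_RGT_0).
  assert (H := subst (fun t => t ^ m) ltac:(intros; apply cont_ex; auto_derive; auto)).
  replace ((PI - Wc (m + 2)) / (2 * PI * (INR m + 2)))
    with (RInt (fun th => sin th * (Kinf (cos th) * cos th ^ m)) 0 PI); [exact H|].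
  assert (HF : forall x, is_derive (fun x => - / (INR m + 2) * cos x ^ (m + 2)) x (sin x * cos x ^ (m + 1))).
  { intros x. auto_derive; auto.
    replace (m + 2)%nat with (S (S m)) by lia. replace (m + 1)%nat with (S m) by lia.
    rewrite !S_INR. simpl. field. auto. }
  pose proof (bp _ _ HF ltac:(intros; apply cont_ex; auto_derive; auto)) as B.
  rewrite (RInt_ext (V:=R_CompleteNormedModule) _ (fun x => / (2 * PI) * (PI - x) * (sin x * cos x ^ (m + 1)))).
  2: { intros x Hx. rewrite Rmin_left, Rmax_right in Hx by lra.
       unfold Kinf. rewrite acos_cos by lra. replace (m + 1)%nat with (S m) by lia. simpl. ring. }
  rewrite (RInt_val _ _ _ _ B).
  set (I := RInt _ 0 PI).
  assert (E : I = - / (INR m + 2) * Wc (m + 2)).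
  { unfold I. apply RInt_val. apply (is_RInt_scal (V:=R_NormedModule) (fun x => cos x ^ (m + 2))).
    apply corr. intros; apply cont_pow_cos. }
  rewrite E. rewrite cos_0, pow1. req. field. split; lra.
Qed.

Lemma dsinpow n x : is_derive (fun x => / INR (S n) * sin x ^ (S n)) x (cos x * sin x ^ n).
Proof. auto_derive; auto. change (match n with 0%nat => 1 | S _ => INR n + 1 end) with (INR (S n)). simpl pred. field. apply not_0_INR. auto. Qed.

Lemma K0 (p : nat) :
  is_RInt (fun t => Kinf t * (1 - t ^ 2) ^ p) (-1) 1 (/ (2 * PI) * (/ (INR (2 * p + 2)) * Ws (2 * p + 2))).
Proof.
  assert (Hm : INR (2 * p + 2) <> 0) by (apply not_0_INR; lia).
  assert (HPI := PI_RGT_0).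
  assert (H := subst (fun t => (1 - t ^ 2) ^ p) ltac:(intros; apply cont_ex; auto_derive; auto)).
  replace (/ (2 * PI) * (/ (INR (2 * p + 2)) * Ws (2 * p + 2)))
    with (RInt (fun th => sin th * (Kinf (cos th) * (1 - cos th ^ 2) ^ p)) 0 PI); [exact H|].
  assert (HF : forall x, is_derive (fun x => / INR (2 * p + 2) * sin x ^ (2 * p + 2)) x (cos x * sin x ^ (2 * p + 1))).
  { intros x. replace (2 * p + 2)%nat with (S (2 * p + 1)) by lia. apply dsinpow. }
  pose proof (bp _ _ HF ltac:(intros; apply cont_ex; auto_derive; auto)) as B.
  rewrite (RInt_ext (V:=R_CompleteNormedModule) _ (fun x => / (2 * PI) * (PI - x) * (cos x * sin x ^ (2 * p + 1)))).
  2: { intros x Hx. rewrite Rmin_left, Rmax_right in Hx by lra.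
       unfold Kinf. rewrite acos_cos by lra.
       replace (1 - cos x ^ 2) with (sin x ^ 2) by (pose proof (sin2 x); unfold Rsqr in *; simpl; lra).
       rewrite <- pow_mult. replace (2 * p + 1)%nat with (S (2 * p)) by lia. simpl. ring. }
  rewrite (RInt_val _ _ _ _ B).
  set (I := RInt _ 0 PI).
  assert (E : I = / INR (2 * p + 2) * Ws (2 * p + 2)).
  { unfold I. apply RInt_val. apply (is_RInt_scal (V:=R_NormedModule) (fun x => sin x ^ (2 * p + 2))).
    apply corr. intros; apply cont_pow_sin. }
  rewrite E. rewrite sin_0. replace (2 * p + 2)%nat with (S (2 * p + 1)) at 2 by lia. simpl pow.
  req. ring.
Qed.

Fixpoint bin (n k : nat) : R :=
  match n, k with
  | _, O => 1
  | O, S _ => 0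
  | S n, S k => bin n k + bin n (S k)
  end.

Lemma bin_0 n : bin n 0 = 1.
Proof. destruct n; reflexivity. Qed.

Lemma bin_big n k : (n < k)%nat -> bin n k = 0.
Proof.
  revert k. induction n as [|n IH]; intros k Hk; destruct k as [|k]; try lia; simpl; auto.
  rewrite !IH by lia. ring.
Qed.

Lemma bin_C n k : (k <= n)%nat -> bin n k = Binomial.C n k.
Proof.
  revert k. induction n as [|n IH]; intros k Hk.
  - destruct k; [|lia]. unfold Binomial.C. simpl. field.
  - destruct k as [|k].
    + unfold Binomial.C. simpl bin. rewrite Nat.sub_0_r. simpl (fact 0). simpl (INR 1). field. apply INR_fact_neq_0.
    + simpl bin. destruct (Nat.eq_dec k n) as [->|Hne].
      * rewrite (bin_big n (S n)) by lia. rewrite IH by lia.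
        unfold Binomial.C. rewrite !Nat.sub_diag. field. repeat split; apply INR_fact_neq_0.
      * rewrite !IH by lia. apply pascal. lia.
Qed.

Definition alt (p : nat) (f : nat -> R) : R :=
  sum_f_R0 (fun q => (-1) ^ q * bin p q * f q) p.

Lemma sum_neg (a : nat -> R) n : sum_f_R0 (fun i => - a i) n = - sum_f_R0 a n.
Proof. induction n as [|n IH]; simpl; [ring|rewrite IH; ring]. Qed.

Lemma alt_S p f : alt (S p) f = - alt p (fun q => f (S q) - f q).
Proof.
  unfold alt.
  set (B := sum_f_R0 (fun i => (-1) ^ i * bin p i * f (S i)) p).
  set (Cc := sum_f_R0 (fun i => (-1) ^ S i * bin p (S i) * f (S i)) p).
  assert (E1 : sum_f_R0 (fun q => (-1) ^ q * bin (S p) q * f q) (S p) = f 0%nat + (- B + Cc)).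
  { rewrite decomp_sum by lia. simpl pred. f_equal; [simpl; ring|].
    unfold B, Cc. rewrite <- sum_neg, <- plus_sum. apply sum_eq. intros i _. simpl bin. simpl pow. ring. }
  assert (E2 : sum_f_R0 (fun q => (-1) ^ q * bin p q * f q) p = f 0%nat + Cc).
  { transitivity (sum_f_R0 (fun q => (-1) ^ q * bin p q * f q) (S p)).
    - rewrite tech5. rewrite (bin_big p (S p)) by lia. ring.
    - rewrite decomp_sum by lia. simpl pred. f_equal. rewrite bin_0. simpl; ring. }
  assert (E3 : sum_f_R0 (fun q => (-1) ^ q * bin p q * (f (S q) - f q)) p =
               B - sum_f_R0 (fun q => (-1) ^ q * bin p q * f q) p).
  { unfold B. rewrite <- minus_sum. apply sum_eq. intros; ring. }
  rewrite E1, E3, E2. ring.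
Qed.

Fixpoint Dd (n : nat) (f : nat -> R) : Prop :=
  match n with
  | O => forall q, f q = 0
  | S n => Dd n (fun q => f (S q) - f q)
  end.

Lemma alt_zero p f : Dd p f -> alt p f = 0.
Proof.
  revert f. induction p as [|p IH]; intros f H.
  - unfold alt. simpl. rewrite H. ring.
  - rewrite alt_S, IH; [ring|exact H].
Qed.

Lemma Dd_ext n f g : (forall q, f q = g q) -> Dd n f -> Dd n g.
Proof.
  revert f g. induction n as [|n IH]; intros f g E H; simpl in *.
  - intros q. rewrite <- E. auto.
  - eapply IH; [|exact H]. intros q. simpl. rewrite !E. auto.
Qed.

Lemma Dd_plus n f g : Dd n f -> Dd n g -> Dd n (fun q => f q + g q).
Proof.
  revert f g. induction n as [|n IH]; intros f g Hf Hg; simpl in *.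
  - intros q. rewrite Hf, Hg. ring.
  - eapply Dd_ext; [|apply (IH _ _ Hf Hg)]. intros q. simpl. ring.
Qed.

Lemma Dd_scal n c f : Dd n f -> Dd n (fun q => c * f q).
Proof.
  revert f. induction n as [|n IH]; intros f Hf; simpl in *.
  - intros q. rewrite Hf. ring.
  - eapply Dd_ext; [|apply (IH _ Hf)]. intros q. simpl. ring.
Qed.

Lemma Dd_shift n f : Dd n f -> Dd n (fun q => f (S q)).
Proof.
  revert f. induction n as [|n IH]; intros f Hf; simpl in *.
  - intros q. apply Hf.
  - apply (IH _ Hf).
Qed.

Lemma Dd_mono n f : Dd n f -> Dd (S n) f.
Proof.
  revert f. induction n as [|n IH]; intros f Hf; simpl in *.
  - intros q. rewrite !Hf. ring.
  - apply (IH (fun q => f (S q) - f q) Hf).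
Qed.

Lemma Dd_mono_le n m f : (n <= m)%nat -> Dd n f -> Dd m f.
Proof. intros H. induction H; auto. intros. apply Dd_mono; auto. Qed.

Lemma Dd_lin n a b f : Dd n f -> Dd (S n) (fun q => (a * INR q + b) * f q).
Proof.
  revert f. induction n as [|n IH]; intros f Hf.
  - simpl in *. intros q. rewrite !Hf. ring.
  - change (Dd (S n) (fun q => (a * INR (S q) + b) * f (S q) - (a * INR q + b) * f q)).
    eapply Dd_ext; [|apply (Dd_plus _ _ _ (IH (fun q => f (S q) - f q) Hf) (Dd_scal _ a _ (Dd_shift _ _ Hf)))].
    intros q. cbv beta. rewrite S_INR. ring.
Qed.

Lemma ffn_zero n j : (n < j)%nat -> ffn n j = 0%nat.
Proof.
  induction j as [|j IH]; intros H; [lia|]. simpl.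
  destruct (Nat.eq_dec n j) as [->|Hne].
  - rewrite Nat.sub_diag. lia.
  - rewrite IH by lia. lia.
Qed.

Lemma ffn_lin j q : INR (ffn (2 * q) (S j)) = INR (ffn (2 * q) j) * (2 * INR q - INR j).
Proof.
  change (ffn (2 * q) (S j)) with (ffn (2 * q) j * (2 * q - j))%nat.
  rewrite mult_INR. destruct (le_lt_dec j (2 * q)) as [H|H].
  - rewrite minus_INR by lia. rewrite mult_INR. simpl (INR 2). ring.
  - rewrite ffn_zero by lia. simpl. ring.
Qed.

Lemma Dd_ffn j : Dd (S j) (fun q => INR (ffn (2 * q) j)).
Proof.
  induction j as [|j IH].
  - simpl. intros; ring.
  - eapply Dd_ext; [|apply (Dd_lin _ 2 (- INR j) _ IH)].
    intros q. rewrite ffn_lin. ring.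
Qed.

Lemma ffn_fact n k : (k <= n)%nat -> (ffn n k * fact (n - k) = fact n)%nat.
Proof.
  induction k as [|k IH]; intros H.
  - simpl. rewrite Nat.sub_0_r. lia.
  - change (ffn n (S k)) with (ffn n k * (n - k))%nat. replace (n - k)%nat with (S (n - S k)) in IH by lia.
    rewrite <- IH by lia. change (fact (S (n - S k))) with (S (n - S k) * fact (n - S k))%nat.
    replace (S (n - S k)) with (n - k)%nat by lia. ring.
Qed.

Lemma ffn_INR n k : (k <= n)%nat -> INR (ffn n k) = INR (fact n) / INR (fact (n - k)).
Proof.
  intros H. rewrite <- (ffn_fact n k H), mult_INR. field. apply INR_fact_neq_0.
Qed.

Lemma fold_plus (l : list R) x : fold_right Rplus x l = x + fold_right Rplus 0 l.
Proof. induction l as [|a l IH]; simpl; [ring|rewrite IH; ring]. Qed.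

Lemma fold_seq0 (f : nat -> R) b : fold_right Rplus 0 (map f (seq 0 (S b))) = sum_f_R0 f b.
Proof.
  induction b as [|b IH]; [simpl; ring|].
  rewrite seq_S, map_app, fold_right_app, fold_plus, IH. simpl. ring.
Qed.

Lemma sumR_sum a b (f g : nat -> R) : (a <= S b)%nat ->
  (forall q, (q < a)%nat -> g q = 0) -> (forall q, (a <= q <= b)%nat -> g q = f q) ->
  sumR a b f = sum_f_R0 g b.
Proof.
  intros Hab H1 H2. rewrite <- fold_seq0.
  assert (Hb : S b = (a + (S b - a))%nat) by lia.
  set (n := (S b - a)%nat) in Hb. rewrite Hb.
  rewrite seq_app, map_app, fold_right_app, fold_plus. simpl (0 + a)%nat.
  assert (Z : fold_right Rplus 0 (map g (seq 0 a)) = 0).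
  { assert (forall l, (forall q, In q l -> (q < a)%nat) -> fold_right Rplus 0 (map g l) = 0).
    { induction l as [|x l IH]; intros Hl; simpl; auto. rewrite H1, IH. ring. intros q Hq; apply Hl; simpl; auto. apply Hl; simpl; auto. }
    apply H. intros q Hq. apply in_seq in Hq. lia. }
  rewrite Z, Rplus_0_r. unfold sumR, n. f_equal. apply map_ext_in. intros q Hq. apply in_seq in Hq.
  symmetry. apply H2. lia.
Qed.

Lemma is_RInt_sum (F : nat -> R -> R) (v : nat -> R) a b n :
  (forall q, is_RInt (F q) a b (v q)) ->
  is_RInt (fun t => sum_f_R0 (fun q => F q t) n) a b (sum_f_R0 v n).
Proof.
  intros H. induction n as [|n IH]; simpl.
  - apply H.
  - apply (is_RInt_plus (V:=R_NormedModule) _ (F (S n)) a b _ _ IH (H (S n))).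
Qed.

Definition Jv (m : nat) : R := (PI - Wc (m + 2)) / (2 * PI * (INR m + 2)).

Lemma main_int p k :
  is_RInt (fun t => Kinf t * Tp p k t) (-1) 1
    (sum_f_R0 (fun q => (-1) ^ q * Binomial.C p q * INR (ffn (2 * q) k) * Jv (2 * q - k)) p).
Proof.
  eapply is_RInt_ext; [|apply (is_RInt_sum (fun q t => ((-1) ^ q * Binomial.C p q * INR (ffn (2 * q) k)) * (Kinf t * t ^ (2 * q - k))))].
  - intros t _. unfold Tp. rewrite scal_sum. apply sum_eq. intros; ring.
  - intros q. apply (is_RInt_scal (V:=R_NormedModule) (fun t => Kinf t * t ^ (2 * q - k))). apply Jm.
Qed.

Lemma final h k (I : R) :
  is_RInt (fun t => Kinf t * Tp (k + h) k t) (-1) 1 I ->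
  Defs.C1 (2 * S h)%nat k * I = akd_formula (2 * S h)%nat k ->
  exists Dk : R -> R,
    nth_deriv k (fun t => (1 - t ^ 2) ^ (k + (2 * S h - 2) / 2)) Dk /\
    exists pr : Riemann_integrable (akd_integrand (2 * S h)%nat k Dk) (-1) 1,
      Vd (2 * S h)%nat * RiemannInt pr = akd_formula (2 * S h)%nat k.
Proof.
  intros HI HF.
  assert (E1 : (2 * S h / 2 = S h)%nat) by (rewrite Nat.mul_comm; apply Nat.div_mul; lia).
  assert (E2 : ((2 * S h - 2) / 2 = h)%nat)
    by (replace (2 * S h - 2)%nat with (h * 2)%nat by lia; apply Nat.div_mul; lia).
  rewrite E2.
  exists (Tp (k + h) k). split.
  { rewrite Tp0. apply (Tp_nth (k + h) k 0). }
  set (cst := (-1) ^ k / 2 ^ k * (INR (fact h) / INR (fact (k + h)))).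
  assert (HA : is_RInt (akd_integrand (2 * S h) k (Tp (k + h) k)) (-1) 1 (cst * I)).
  { eapply is_RInt_ext; [|apply (is_RInt_scal (V:=R_NormedModule) _ _ _ cst _ HI)].
    intros t Ht. rewrite Rmin_left, Rmax_right in Ht by lra.
    unfold akd_integrand, Pkd, cst. rewrite E1, E2.
    replace (S h - 1)%nat with h by lia. replace (k + S h - 1)%nat with (k + h)%nat by lia.
    assert (Hne : (1 - t ^ 2) ^ h <> 0) by (apply pow_nonzero; nra).
    change (scal cst (Kinf t * Tp (k + h) k t)) with (cst * (Kinf t * Tp (k + h) k t)).
    unfold cst. match goal with |- scal ?a ?b = _ => change (scal a b) with (a * b) end. req. field. split; [exact Hne|]. split; [apply INR_fact_neq_0|]. apply pow_nonzero; lra. }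
  exists (ex_RInt_Reals_0 _ _ _ (ex_intro _ _ HA)).
  rewrite <- RInt_Reals. rewrite (RInt_val _ _ _ _ HA). rewrite <- HF.
  unfold Vd, Defs.C1, cst. rewrite E1. replace (k + S h - 1)%nat with (k + h)%nat by lia.
  rewrite fact_simpl, mult_INR. field.
  repeat split; try apply INR_fact_neq_0; try (apply not_0_INR; lia); try (apply pow_nonzero; lra).
Qed.

Lemma case0 h : Defs.C1 (2 * S h)%nat 0 * (/ (2 * PI) * (/ INR (2 * h + 2) * Ws (2 * h + 2))) = akd_formula (2 * S h)%nat 0.
Proof.
  assert (E1 : (2 * S h / 2 = S h)%nat) by (rewrite Nat.mul_comm; apply Nat.div_mul; lia).
  unfold akd_formula. simpl Nat.eqb. cbv iota. rewrite E1.
  replace (2 * h + 2)%nat with (2 * S h)%nat by lia.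
  rewrite Ws_even. unfold wal. rewrite pow_add.
  assert (HPI := PI_RGT_0).
  assert (H1 : INR (2 * S h) <> 0) by (apply not_0_INR; lia).
  assert (H2 : 2 ^ (2 * S h) <> 0) by (apply pow_nonzero; lra).
  field. repeat split; auto; lra.
Qed.

Lemma case1 h : Defs.C1 (2 * S h)%nat 1 *
   sum_f_R0 (fun q => (-1) ^ q * Binomial.C (1 + h) q * INR (ffn (2 * q) 1) * Jv (2 * q - 1)) (1 + h)
   = akd_formula (2 * S h)%nat 1.
Proof.
  assert (E2 : ((2 * S h - 2) / 2 = h)%nat)
    by (replace (2 * S h - 2)%nat with (h * 2)%nat by lia; apply Nat.div_mul; lia).
  unfold akd_formula. simpl Nat.eqb. cbv iota. f_equal. unfold pp. rewrite E2.
  symmetry. apply sumR_sum; [lia| |].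
  - intros q Hq. replace q with 0%nat by lia. simpl. ring.
  - intros q Hq. unfold C2, pp. rewrite E2.
    rewrite (ffn_INR (2 * q) 1) by lia. unfold Jv.
    replace (2 * q - 1 + 2)%nat with (2 * q + 1)%nat by lia. rewrite Wc_odd.
    assert (E : INR (2 * q - 1) + 2 = INR (2 * q + 1)).
    { replace (2 * q + 1)%nat with ((2 * q - 1) + 2)%nat by lia. rewrite plus_INR. simpl. ring. }
    rewrite E.
    assert (HPI := PI_RGT_0).
    assert (H1 : INR (2 * q + 1) <> 0) by (apply not_0_INR; lia).
    field. split; auto. split; [apply INR_fact_neq_0| lra].
Qed.

Lemma div2_h a b r : (r < 2)%nat -> a = (2 * b + r)%nat -> (a / 2 = b)%nat.
Proof. intros H1 H2. symmetry. apply (Nat.div_unique a 2 b r); auto. Qed.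

Lemma caseEven h r : let k := (2 * S r)%nat in
  Defs.C1 (2 * S h)%nat k *
   sum_f_R0 (fun q => (-1) ^ q * Binomial.C (k + h) q * INR (ffn (2 * q) k) * Jv (2 * q - k)) (k + h)
   = akd_formula (2 * S h)%nat k.
Proof.
  intros k.
  assert (E2 : ((2 * S h - 2) / 2 = h)%nat) by (apply (div2_h _ _ 0); lia).
  unfold akd_formula.
  rewrite (proj2 (Nat.eqb_neq k 0)) by (unfold k; lia).
  rewrite (proj2 (Nat.eqb_neq k 1)) by (unfold k; lia).
  rewrite (proj2 (Nat.even_spec k)) by (exists (S r); reflexivity).
  f_equal. unfold pp. rewrite E2.
  assert (E3 : ((k + 1) / 2 = S r)%nat) by (apply (div2_h _ _ 1); unfold k; lia).
  rewrite E3.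
  symmetry. apply sumR_sum; [unfold k; lia| |].
  - intros q Hq. rewrite ffn_zero by (unfold k; lia). simpl INR. ring.
  - intros q Hq. unfold C2, pp. rewrite E2.
    rewrite (ffn_INR (2 * q) k) by (unfold k; lia). unfold Jv.
    set (s := (q - S r)%nat).
    replace (2 * q - k + 2)%nat with (2 * S s)%nat by (unfold s, k; lia).
    replace (2 * q - k)%nat with (2 * s)%nat by (unfold s, k; lia).
    replace ((2 * S s) / 2)%nat with (S s) by (symmetry; apply (div2_h _ _ 0); lia).
    replace (2 * s + 2)%nat with (2 * S s)%nat by lia.
    rewrite Wc_even. unfold wal.
    assert (E : INR (2 * s) + 2 = INR (2 * S s)).
    { replace (2 * S s)%nat with ((2 * s) + 2)%nat by lia. rewrite plus_INR. simpl. ring. }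
    rewrite E.
    assert (HPI := PI_RGT_0).
    assert (H1 : INR (2 * S s) <> 0) by (apply not_0_INR; lia).
    assert (H2 : 2 ^ (2 * S s) <> 0) by (apply pow_nonzero; lra).
    field. repeat split; auto; try lra. apply INR_fact_neq_0.
Qed.

Lemma caseOdd h r : let k := (2 * S r + 1)%nat in
  Defs.C1 (2 * S h)%nat k *
   sum_f_R0 (fun q => (-1) ^ q * Binomial.C (k + h) q * INR (ffn (2 * q) k) * Jv (2 * q - k)) (k + h)
   = akd_formula (2 * S h)%nat k.
Proof.
  intros k.
  unfold akd_formula.
  rewrite (proj2 (Nat.eqb_neq k 0)) by (unfold k; lia).
  rewrite (proj2 (Nat.eqb_neq k 1)) by (unfold k; lia).
  assert (Ev : Nat.even k = false).
  { rewrite <- Nat.negb_odd. rewrite (proj2 (Nat.odd_spec k)). reflexivity. exists (S r). reflexivity. }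
  rewrite Ev.
  set (j := (2 * r + 1)%nat).
  assert (Hk : k = S (S j)) by (unfold k, j; lia).
  set (hh := fun q => / 2 * (INR (ffn (2 * q) j) * (2 * INR q + (1 - INR k)))).
  assert (Hh : forall q, INR (ffn (2 * q) k) * Jv (2 * q - k) = hh q).
  { intros q. unfold hh. destruct (le_lt_dec k (2 * q)) as [H|H].
    - unfold Jv. replace (2 * q - k + 2)%nat with (2 * (q - S r) + 1)%nat by (unfold k; lia).
      rewrite Wc_odd. rewrite Hk.
      change (ffn (2 * q) (S (S j))) with (ffn (2 * q) j * (2 * q - j) * (2 * q - S j))%nat.
      rewrite !mult_INR. rewrite !minus_INR by (unfold j, k in *; lia).
      rewrite !mult_INR, !S_INR. assert (HPI := PI_RGT_0).
      assert (Hq : INR (S (S j)) <= INR (2 * q)) by (apply le_INR; unfold j, k in *; lia).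
      rewrite mult_INR, !S_INR in Hq. simpl (INR 2) in Hq. simpl (INR 0).
      simpl (INR 0) in Hq. field. split; lra.
    - rewrite ffn_zero by lia. change (INR 0) with 0.
      destruct (Nat.eq_dec (2 * q) (S j)) as [E|E].
      + replace (2 * INR q + (1 - INR k)) with 0. ring.
        rewrite Hk, !S_INR. replace (2 * INR q) with (INR (2 * q)) by (rewrite mult_INR; reflexivity).
        rewrite E, S_INR. ring.
      + rewrite ffn_zero by (unfold j, k in *; lia). change (INR 0) with 0. ring. }
  assert (HD : Dd (k + h) hh).
  { apply (Dd_mono_le k); [lia|]. unfold hh.
    apply Dd_scal. rewrite Hk.
    eapply Dd_ext; [|apply (Dd_lin _ 2 (1 - INR (S (S j))) _ (Dd_ffn j))].
    intros q. cbv beta. ring. }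
  assert (Z : sum_f_R0 (fun q => (-1) ^ q * Binomial.C (k + h) q * INR (ffn (2 * q) k) * Jv (2 * q - k)) (k + h) = 0).
  { rewrite <- (alt_zero _ _ HD). unfold alt. apply sum_eq. intros q Hq.
    rewrite bin_C by lia. rewrite <- Hh. ring. }
  rewrite Z. ring.
Qed.

Theorem mainTheorem6 (d k : nat) (hd : (2 <= d)%nat) (hev : Nat.Even d) :
  exists Dk : R -> R,
    nth_deriv k (fun t => (1 - t ^ 2) ^ (k + (d - 2) / 2)) Dk /\
    exists pr : Riemann_integrable (akd_integrand d k Dk) (-1) 1,
      Vd d * RiemannInt pr = akd_formula d k.
Proof.
  destruct hev as [m Hm]. destruct m as [|h]; [lia|]. subst d.
  destruct k as [|[|k']].
  - apply (final h 0 (/ (2 * PI) * (/ INR (2 * h + 2) * Ws (2 * h + 2)))).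
    + eapply is_RInt_ext; [|apply (K0 h)]. intros t _. simpl (0 + h)%nat. rewrite <- Tp0. reflexivity.
    + apply case0.
  - apply (final h 1 _ (main_int (1 + h) 1)). apply case1.
  - destruct (Nat.Even_or_Odd k') as [[r Hr]|[r Hr]].
    + replace (S (S k')) with (2 * S r)%nat by lia.
      apply (final h _ _ (main_int _ _)). apply caseEven.
    + replace (S (S k')) with (2 * S r + 1)%nat by lia.
      apply (final h _ _ (main_int _ _)). apply caseOdd.
Qed.
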